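(* For $n\ge 3$ and $r>0$, let $T_n(r)$ be a regular $n$-gon centered at the origin whose vertices lie at distance $r$ from the origin. Then $P_{\gamma_2}(T_n(r))<\sqrt{2/\pi}$ for every $r>0$ and every $n\ge 3$.
   Context: For a convex set $\Omega\subset\mathbb{R}^2$, its Gaussian perimeter is $P_{\gamma_2}(\Omega)=\frac{1}{2\pi}\int_{\partial\Omega}\exp\left(-\frac{|\mathbf{x}|^2}{2}\right)d\mathcal{H}^1(\mathbf{x})$, where $\mathcal{H}^1$ is the one-dimensional Hausdorff measure. *)

(* Defs.v *)
From Stdlib Require Import Reals Lra.
From Coquelicot Require Import Coquelicot.
Open Scope R_scope.

Definition pt := (R * R)%type.

Definition sqnorm (x : pt) : R := fst x ^ 2 + snd x ^ 2.
Definition dist2 (a b : pt) : R := sqrt ((fst b - fst a) ^ 2 + (snd b - snd a) ^ 2).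

Definition gauss_weight (x : pt) : R := exp (- sqnorm x / 2).

Definition seg_point (a b : pt) (t : R) : pt :=
  (fst a + t * (fst b - fst a), snd a + t * (snd b - snd a)).

(* Integral of f over the segment [a,b] with respect to the one-dimensional
   Hausdorff measure H^1 = arc length: int_0^1 f(a + t(b-a)) |b-a| dt. *)
Definition seg_integral (f : pt -> R) (a b : pt) : R :=
  RInt (fun t => f (seg_point a b t)) 0 1 * dist2 a b.

(* Vertices of a convex polygon listed cyclically: v 0, ..., v (n-1). *)
Definition gaussian_perimeter_polygon (n : nat) (v : nat -> pt) : R :=
  / (2 * PI) *
  sum_f_R0 (fun k => seg_integral gauss_weight (v k) (v (Nat.modulo (S k) n))) (pred n).

Definition regular_ngon_vertex (n : nat) (r theta : R) (k : nat) : pt :=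
  (r * cos (theta + 2 * PI * INR k / INR n), r * sin (theta + 2 * PI * INR k / INR n)).

Definition gaussian_perimeter_regular_ngon (n : nat) (r theta : R) : R :=
  gaussian_perimeter_polygon n (regular_ngon_vertex n r theta).

(* Main.v *)
Require Import Defs.
From Stdlib Require Import Reals Lra Lia Psatz.
From Coquelicot Require Import Coquelicot.
Open Scope R_scope.

Lemma seg_sqnorm r a b u :
  sqnorm (seg_point (r*cos a, r*sin a) (r*cos b, r*sin b) u)
  = r^2*(1 - 2*u*(1-u)*(1 - cos (b - a))).
Proof.
  unfold sqnorm, seg_point; cbn [fst snd]. rewrite cos_minus.
  pose proof (sin2_cos2 a) as Ha. pose proof (sin2_cos2 b) as Hb.
  unfold Rsqr in *.
  replace ((r * cos a + u * (r * cos b - r * cos a)) ^ 2 +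
   (r * sin a + u * (r * sin b - r * sin a)) ^ 2) with
   (r^2*((1-u)^2*(sin a * sin a + cos a * cos a) + u^2*(sin b * sin b + cos b * cos b)
     + 2*u*(1-u)*(cos b * cos a + sin b * sin a))) by ring.
  rewrite Ha, Hb. ring.
Qed.

Lemma seg_dist r a b :
  dist2 (r*cos a, r*sin a) (r*cos b, r*sin b) = sqrt (r^2*(2 - 2*cos (b - a))).
Proof.
  unfold dist2; cbn [fst snd]. rewrite cos_minus. f_equal.
  pose proof (sin2_cos2 a) as Ha. pose proof (sin2_cos2 b) as Hb.
  unfold Rsqr in *.
  replace ((r * cos b - r * cos a) ^ 2 + (r * sin b - r * sin a) ^ 2) with
   (r^2*((sin a * sin a + cos a * cos a) + (sin b * sin b + cos b * cos b)
     - 2*(cos b * cos a + sin b * sin a))) by ring.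
  rewrite Ha, Hb. ring.
Qed.

Definition Jval (r c : R) : R :=
  RInt (fun u => exp (- (r^2*(1 - 2*u*(1-u)*(1 - c))) / 2)) 0 1 * sqrt (r^2*(2 - 2*c)).

Lemma angle_diff (n : nat) (theta : R) (k : nat) :
  (3 <= n)%nat -> (k <= pred n)%nat ->
  cos ((theta + 2 * PI * INR (Nat.modulo (S k) n) / INR n) - (theta + 2 * PI * INR k / INR n))
  = cos (2 * PI / INR n).
Proof.
  intros Hn Hk.
  assert (HnR : INR n <> 0) by (apply not_0_INR; lia).
  destruct (Nat.eq_dec (S k) n) as [E|E].
  - rewrite E, Nat.mod_same by lia. rewrite <- E in HnR |- *.
    rewrite S_INR. simpl INR at 1.
    replace (theta + 2 * PI * 0 / (INR k + 1) - (theta + 2 * PI * INR k / (INR k + 1)))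
      with (2 * PI / (INR k + 1) + - (2 * PI)) by (field; rewrite <- S_INR; auto).
    rewrite cos_plus, cos_neg, sin_neg, cos_2PI, sin_2PI. ring.
  - rewrite Nat.mod_small by lia. rewrite S_INR. f_equal. field; auto.
Qed.

Lemma perim_eq (n : nat) (r theta : R) :
  (3 <= n)%nat ->
  gaussian_perimeter_regular_ngon n r theta = / (2 * PI) * (Jval r (cos (2 * PI / INR n)) * INR n).
Proof.
  intros Hn. unfold gaussian_perimeter_regular_ngon, gaussian_perimeter_polygon.
  f_equal.
  rewrite (sum_eq _ (fun _ => Jval r (cos (2 * PI / INR n)))).
  - rewrite sum_cte. f_equal. f_equal. lia.
  - intros k Hk. unfold seg_integral, regular_ngon_vertex, Jval.
    rewrite seg_dist, angle_diff by auto. f_equal.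
    apply RInt_ext. intros u _. unfold gauss_weight.
    rewrite seg_sqnorm, angle_diff by auto. reflexivity.
Qed.

Definition ash (x : R) : R := ln (x + sqrt (1 + x^2)).

Lemma ash_facts x : 0 < sqrt (1 + x^2) /\ sqrt (1 + x^2) * sqrt (1 + x^2) = 1 + x^2
  /\ 0 < x + sqrt (1 + x^2).
Proof.
  assert (Hp : 0 < 1 + x^2) by nra.
  assert (HS : 0 < sqrt (1 + x^2)) by (apply sqrt_lt_R0; auto).
  assert (HS2 : sqrt (1 + x^2) * sqrt (1 + x^2) = 1 + x^2) by (apply sqrt_sqrt; lra).
  repeat split; auto.
  destruct (Rle_or_lt 0 x). lra. nra.
Qed.

Lemma ash_deriv x : is_derive ash x (/ sqrt (1 + x^2)).
Proof.
  unfold ash. destruct (ash_facts x) as [HS [HS2 Hw]].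
  assert (E : 1 + x * (x * 1) = 1 + x^2) by ring.
  auto_derive.
  - rewrite E. repeat split; try lra. nra.
  - rewrite E.
    set (S := sqrt (1 + x^2)) in *.
    assert (S <> 0) by lra. assert (x + S <> 0) by lra.
    apply (Rmult_eq_reg_r ((x+S)*S)); [|nra].
    field_simplify; try lra.
Qed.
Lemma s3 : 1.732 < sqrt 3 < 1.7321.
Proof.
  assert (H := sqrt_sqrt 3). assert (H0 := sqrt_pos 3).
  split; nra.
Qed.

Lemma Hder u : is_derive (fun u => / (2 * sqrt 3) * ash (sqrt 3 * (2*u-1))) u
   (/ sqrt (1 + (sqrt 3 * (2*u-1))^2)).
Proof.
  pose proof s3.
  assert (Hg : is_derive (fun u => sqrt 3 * (2*u-1)) u (2 * sqrt 3)).
  { auto_derive; auto. ring. }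
  pose proof (is_derive_comp ash (fun u => sqrt 3 * (2*u-1)) u _ _ (ash_deriv _) Hg) as H1.
  pose proof (is_derive_scal _ u (/ (2 * sqrt 3)) _ H1) as H2.
  unfold scal in H2; simpl in H2; unfold mult in H2; simpl in H2.
  rewrite <- Rmult_assoc, Rinv_l, Rmult_1_l in H2 by lra. exact H2.
Qed.

Lemma sqstep a b y : 0 <= a -> a <= exp y -> b <= a * a -> b <= exp (2 * y).
Proof.
  intros H0 H1 H2. replace (2*y) with (y+y) by ring. rewrite exp_plus.
  assert (a * a <= exp y * exp y) by (apply Rmult_le_compat; lra). lra.
Qed.

Lemma exp_half : 1.6422 <= exp (1/2).
Proof.
  assert (H0 : 1 + 1/64 <= exp (1/64)) by apply exp_ineq1_le.
  replace (1/2) with (2*(2*(2*(2*(2*(1/64)))))) by field.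
  apply (sqstep 1.28149); [lra| |lra].
  apply (sqstep 1.13203); [lra| |lra].
  apply (sqstep 1.06397); [lra| |lra].
  apply (sqstep 1.03149); [lra| |lra].
  apply (sqstep (1 + 1/64)); [lra| |lra]. exact H0.
Qed.

Lemma exp_136 : 3.787 <= exp 1.36.
Proof.
  assert (H0 : 1 + 0.0425 <= exp 0.0425) by apply exp_ineq1_le.
  replace 1.36 with (2*(2*(2*(2*(2*0.0425))))) by lra.
  apply (sqstep 1.9461); [lra| |lra].
  apply (sqstep 1.39506); [lra| |lra].
  apply (sqstep 1.18113); [lra| |lra].
  apply (sqstep 1.0868); [lra| |lra].
  apply (sqstep (1 + 0.0425)); [lra| |lra]. exact H0.
Qed.

Lemma int_S : is_RInt (fun u => / sqrt (1 + (sqrt 3 * (2*u-1))^2)) 0 1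
   (/ (2 * sqrt 3) * ash (sqrt 3) - / (2 * sqrt 3) * ash (- sqrt 3)).
Proof.
  assert (E : / (2 * sqrt 3) * ash (sqrt 3) - / (2 * sqrt 3) * ash (- sqrt 3) =
    minus ((fun u => / (2 * sqrt 3) * ash (sqrt 3 * (2*u-1))) 1)
          ((fun u => / (2 * sqrt 3) * ash (sqrt 3 * (2*u-1))) 0)).
  { unfold minus, plus, opp; simpl. replace (sqrt 3 * (2*1-1)) with (sqrt 3) by ring. replace (sqrt 3 * (2*0-1)) with (- sqrt 3) by ring. ring. }
  rewrite E. apply (is_RInt_derive (fun u => / (2 * sqrt 3) * ash (sqrt 3 * (2*u-1)))).
  - intros x _. apply Hder.
  - intros x _. apply (@ex_derive_continuous R_AbsRing R_NormedModule (fun u => / sqrt (1 + (sqrt 3 * (2*u-1))^2))).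
    destruct (ash_facts (sqrt 3 * (2*x-1))) as [HS _].
    assert (Ex : 1 + sqrt 3 * (2 * x + - (1)) * (sqrt 3 * (2 * x + - (1)) * 1) = 1 + (sqrt 3 * (2*x-1))^2) by ring.
    auto_derive. rewrite Ex. split; [apply Rplus_lt_le_0_compat; [apply Rlt_0_1|apply pow2_ge_0]| split; [apply Rgt_not_eq; exact HS|exact I]].
Qed.

Lemma ash_bounds : ash (sqrt 3) <= 1.36 /\ - 1.36 <= ash (- sqrt 3).
Proof.
  pose proof s3. pose proof exp_136.
  assert (E4 : sqrt (1 + sqrt 3 ^ 2) = 2).
  { replace (1 + sqrt 3 ^ 2) with (2*2).
    - apply sqrt_square; lra.
    - rewrite <- Rsqr_pow2, Rsqr_sqrt; lra. }
  assert (E4' : sqrt (1 + (- sqrt 3) ^ 2) = 2).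
  { replace ((- sqrt 3)^2) with (sqrt 3 ^ 2) by ring. exact E4. }
  unfold ash. rewrite E4, E4'. split.
  - rewrite <- (ln_exp 1.36). apply ln_le; lra.
  - rewrite <- (ln_exp (-1.36)). apply ln_le.
    + apply exp_pos.
    + assert (Hm : exp (-1.36) * exp 1.36 = 1).
      { rewrite <- exp_plus. replace (-1.36 + 1.36) with 0 by lra. apply exp_0. }
      pose proof (exp_pos (-1.36)). nra.
Qed.

Lemma exp_mono x y : x <= y -> exp x <= exp y.
Proof. intros H. destruct (Rle_lt_or_eq_dec _ _ H). left; apply exp_increasing; auto. subst; lra. Qed.

Lemma xexp x : 0 < x -> exp (- (x^2) / 2) <= exp (-1/2) / x.
Proof.
  intros Hx.
  assert (H1 : 1 + (x^2/2 - 1/2) <= exp (x^2/2 - 1/2)) by apply exp_ineq1_le.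
  assert (H2 : exp (- (x^2) / 2) * exp (x^2/2 - 1/2) = exp (-1/2)).
  { rewrite <- exp_plus. f_equal. field. }
  pose proof (exp_pos (- (x^2) / 2)).
  apply (Rmult_le_reg_r x); auto.
  assert (H3 : exp (-1/2) / x * x = exp (-1/2)) by (field; lra).
  rewrite H3, <- H2. apply Rmult_le_compat_l; [lra|].
  assert (0 <= (x-1)^2) by apply pow2_ge_0. lra.
Qed.

Lemma Jint_ex r c : ex_RInt (fun u => exp (- (r^2*(1 - 2*u*(1-u)*(1 - c))) / 2)) 0 1.
Proof.
  apply (@ex_RInt_continuous R_CompleteNormedModule). intros z _.
  apply (@ex_derive_continuous R_AbsRing R_NormedModule (fun u => exp (- (r^2*(1 - 2*u*(1-u)*(1 - c))) / 2))).
  auto_derive. exact I.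
Qed.

Lemma J_ge4 r t : 0 < r -> 0 < sin t ->
  Jval r (cos (2*t)) <= exp (- ((r*cos t)^2) / 2) * (2*r*sin t).
Proof.
  intros Hr Hs. unfold Jval. rewrite cos_2a_sin.
  replace (r ^ 2 * (2 - 2 * (1 - 2 * sin t * sin t))) with ((2*r*sin t)^2) by ring.
  rewrite sqrt_pow2 by nra.
  apply Rmult_le_compat_r; [nra|].
  eapply Rle_trans.
  - apply (RInt_le _ (fun _ => exp (- ((r*cos t)^2) / 2))).
    + lra.
    + apply Jint_ex.
    + apply ex_RInt_const.
    + intros u Hu. apply exp_mono.
      pose proof (sin2_cos2 t) as Hsc. unfold Rsqr in Hsc.
      assert (0 <= sin t * sin t * (2*u-1)^2) by (apply Rmult_le_pos; [nra| apply pow2_ge_0]).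
      assert (r^2 * (1 - 2 * u * (1 - u) * (1 - (1 - 2 * sin t * sin t))) - (r * cos t)^2
              = r^2 * (sin t * sin t * (2*u-1)^2)).
      { assert (Hc : cos t * cos t = 1 - sin t * sin t) by lra.
        replace ((r * cos t)^2) with (r^2 * (cos t * cos t)) by ring. rewrite Hc. ring. }
      assert (0 <= r^2 * (sin t * sin t * (2*u-1)^2)) by (apply Rmult_le_pos; [nra|lra]).
      lra.
  - rewrite RInt_const. unfold scal; simpl; unfold mult; simpl. lra.
Qed.

Lemma J3 r : 0 < r -> Jval r (- (1/2)) <= exp (-1/2) * (2*1.36).
Proof.
  intros Hr. unfold Jval. pose proof s3 as H3.
  assert (Hs3 : sqrt 3 * sqrt 3 = 3) by (apply sqrt_sqrt; lra).
  replace (r ^ 2 * (2 - 2 * - (1 / 2))) with ((r * sqrt 3)^2);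
    [| replace ((r*sqrt 3)^2) with (r^2*(sqrt 3*sqrt 3)) by ring; rewrite Hs3; field].
  rewrite sqrt_pow2 by nra.
  set (K := exp (-1/2) * (2 / r)).
  set (I0 := / (2 * sqrt 3) * ash (sqrt 3) - / (2 * sqrt 3) * ash (- sqrt 3)).
  assert (HI : is_RInt (fun u => K * / sqrt (1 + (sqrt 3 * (2*u-1))^2)) 0 1 (K * I0)).
  { exact (is_RInt_scal _ _ _ K _ int_S). }
  assert (Hle : RInt (fun u => exp (- (r^2*(1 - 2*u*(1-u)*(1 - - (1/2)))) / 2)) 0 1 <= K * I0).
  { rewrite <- (is_RInt_unique _ _ _ _ HI).
    apply RInt_le.
    - lra.
    - apply Jint_ex.
    - eexists; exact HI.
    - intros u Hu.
      destruct (ash_facts (sqrt 3 * (2*u-1))) as [HS [HS2 _]].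
      set (S := sqrt (1 + (sqrt 3 * (2*u-1))^2)) in *.
      assert (E : r ^ 2 * (1 - 2 * u * (1 - u) * (1 - - (1 / 2))) = (r * S / 2)^2).
      { replace ((r * S / 2)^2) with (r^2 * (S * S) / 4) by field.
        rewrite HS2. replace ((sqrt 3 * (2 * u - 1))^2) with ((sqrt 3 * sqrt 3) * (2*u-1)^2) by ring.
        rewrite Hs3. field. }
      rewrite E. eapply Rle_trans; [apply xexp; apply Rdiv_lt_0_compat; nra|].
      unfold K. right. field. split; lra. }
  destruct ash_bounds as [Hb1 Hb2].
  assert (Hr3 : 0 <= r * sqrt 3) by nra.
  eapply Rle_trans; [apply Rmult_le_compat_r; [exact Hr3| exact Hle]|].
  unfold K, I0.
  replace (exp (-1 / 2) * (2 / r) * (/ (2 * sqrt 3) * ash (sqrt 3) - / (2 * sqrt 3) * ash (- sqrt 3)) * (r * sqrt 3))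
    with (exp (-1/2) * (ash (sqrt 3) - ash (- sqrt 3))) by (field; split; lra).
  apply Rmult_le_compat_l; [left; apply exp_pos| lra].
Qed.

Lemma PI_bounds : 3.14 < PI < 3.1416.
Proof.
  destruct (PI_2_3_7_ineq 2) as [H1 H2].
  unfold tg_alt, PI_2_3_7_tg, Ratan_seq in *. simpl in *.
  split; lra.
Qed.

Lemma E_bound : exp (-1/2) <= 0.60894.
Proof.
  pose proof exp_half. pose proof (exp_pos (-1/2)).
  assert (Hm : exp (-1/2) * exp (1/2) = 1).
  { rewrite <- exp_plus. replace (-1/2 + 1/2) with 0 by field. apply exp_0. }
  nra.
Qed.

Lemma sqrt_bound : 0.795 < sqrt (2 / PI).
Proof.
  pose proof PI_bounds.
  replace 0.795 with (sqrt (0.795^2)) by (apply sqrt_pow2; lra).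
  apply sqrt_lt_1; [nra| |].
  - apply Rlt_le, Rdiv_lt_0_compat; lra.
  - apply (Rmult_lt_reg_r PI); [lra|]. unfold Rdiv. rewrite Rmult_assoc, Rinv_l by lra. nra.
Qed.

Theorem proposition2p3 (n : nat) (r theta : R) :
  (3 <= n)%nat -> 0 < r ->
  gaussian_perimeter_regular_ngon n r theta < sqrt (2 / PI).
Proof.
  intros Hn Hr. rewrite perim_eq by auto.
  pose proof PI_bounds as HPI. pose proof E_bound as HE. pose proof sqrt_bound as HS.
  pose proof (exp_pos (-1/2)) as HE0.
  assert (HA0 : 0 < / (2 * PI)) by (apply Rinv_0_lt_compat; lra).
  assert (HA : / (2 * PI) <= 1 / 6.28).
  { apply (Rmult_le_reg_l (2*PI)); [lra|]. rewrite Rinv_r by lra. nra. }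
  eapply Rlt_trans; [|exact HS].
  destruct (Nat.eq_dec n 3) as [E3|E3].
  - subst n. simpl INR.
    replace (2 * PI / (1 + 1 + 1)) with (PI - PI / 3) by field.
    rewrite cos_minus, cos_PI, sin_PI, cos_PI3.
    replace (-1 * (1/2) + 0 * sin (PI / 3)) with (- (1/2)) by ring.
    pose proof (J3 r Hr) as HJ.
    assert (HJ2 : Jval r (- (1/2)) * (1+1+1) <= 0.60894 * (2 * 1.36) * 3) by nra.
    assert (0 <= Jval r (- (1/2)) * (1+1+1) \/ Jval r (- (1/2)) * (1+1+1) < 0) as [Hp|Hp] by lra.
    + assert (/ (2 * PI) * (Jval r (- (1 / 2)) * (1 + 1 + 1)) <= 1/6.28 * (0.60894 * (2 * 1.36) * 3))
        by (apply Rmult_le_compat; lra).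
      lra.
    + assert (/ (2 * PI) * (Jval r (- (1 / 2)) * (1 + 1 + 1)) < 0) by nra. lra.
  - assert (Hn4 : (4 <= n)%nat) by lia.
    assert (HnR : 4 <= INR n) by (replace 4 with (INR 4) by (simpl; lra); apply le_INR; auto).
    set (t := PI / INR n).
    assert (Ht0 : 0 < t) by (apply Rdiv_lt_0_compat; lra).
    assert (Ht4 : t <= PI / 4).
    { unfold t. apply Rmult_le_compat_l; [lra|]. apply Rinv_le_contravar; lra. }
    assert (Hs : 0 < sin t) by (apply sin_gt_0; lra).
    assert (Hc : 0 < cos t) by (apply cos_gt_0; lra).
    replace (2 * PI / INR n) with (2 * t) by (unfold t; field; lra).
    pose proof (J_ge4 r t Hr Hs) as HJ.
    assert (Hx : 0 < r * cos t) by nra.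
    pose proof (xexp _ Hx) as HX.
    assert (HJ2 : Jval r (cos (2 * t)) <= exp (-1/2) / (r * cos t) * (2 * r * sin t)).
    { eapply Rle_trans; [exact HJ|]. apply Rmult_le_compat_r; [nra|exact HX]. }
    assert (HP : / (2 * PI) * (Jval r (cos (2 * t)) * INR n) <=
                 exp (-1/2) * (INR n * sin t) / (PI * cos t)).
    { eapply Rle_trans.
      - apply Rmult_le_compat_l; [lra|]. apply Rmult_le_compat_r; [lra|]. exact HJ2.
      - right. field. repeat split; lra. }
    eapply Rle_lt_trans; [exact HP|].
    destruct (Nat.eq_dec n 4) as [E4|E4].
    + assert (Et : t = PI / 4) by (unfold t; rewrite E4; simpl; field; lra).
      rewrite Et, sin_cos_PI4. rewrite E4. rewrite Et in Hc.
      replace (exp (-1 / 2) * (INR 4 * cos (PI / 4)) / (PI * cos (PI / 4)))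
        with (exp (-1/2) * 4 / PI) by (simpl; field; lra).
      apply (Rmult_lt_reg_r PI); [lra|]. unfold Rdiv. rewrite Rmult_assoc, Rinv_l by lra. nra.
    + assert (HnR5 : 5 <= INR n).
      { replace 5 with (INR 5) by (simpl; lra). apply le_INR; lia. }
      assert (Ht5 : t <= PI / 5).
      { unfold t. apply Rmult_le_compat_l; [lra|]. apply Rinv_le_contravar; lra. }
      assert (Hnt : INR n * t = PI) by (unfold t; field; lra).
      assert (Hsn : INR n * sin t <= PI) by (pose proof (sin_lt_x t Ht0); nra).
      assert (Hct : cos t >= 0.8).
      { replace t with (2 * (t/2)) by field. rewrite cos_2a_sin.
        assert (0 < sin (t/2)) by (apply sin_gt_0; lra).
        pose proof (sin_lt_x (t/2) ltac:(lra)). nra. }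
      apply (Rmult_lt_reg_r (PI * cos t)); [nra|].
      replace (exp (-1 / 2) * (INR n * sin t) / (PI * cos t) * (PI * cos t))
        with (exp (-1 / 2) * (INR n * sin t)) by (field; lra).
      assert (exp (-1/2) * (INR n * sin t) <= 0.60894 * PI).
      { apply Rmult_le_compat; [lra| nra| lra| lra]. }
      nra.
Qed.
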